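(* Let $\eta>0$, $\beta\in\mathbb{R}$ and $\gamma\ge\eta$. Let $\widehat{\mathcal{L}}_1,\widehat{\mathcal{L}}_2\in\mathbb{R}^{N\times N}$ satisfy $\langle \widehat{\mathcal{L}}_i\mathbf{x},\mathbf{x}\rangle\le 0$ for all $\mathbf{x}\in\mathbb{R}^N$, $i=1,2$. Define $$\mathcal{P}_{\gamma}:=\left[\eta I-\widehat{\mathcal{L}}_2+\beta^2(\eta I-\widehat{\mathcal{L}}_1)^{-1}\right](\gamma I-\widehat{\mathcal{L}}_2)^{-1}.$$ Then $\|\mathcal{P}_\gamma\|\le 1+\dfrac{\beta^2}{\gamma\eta}$.
   Context: $\langle\cdot,\cdot\rangle$ is the Euclidean inner product on $\mathbb{R}^N$ and $\|\cdot\|$ the induced operator two-norm. The matrices $\eta I-\widehat{\mathcal{L}}_1$ and $\gamma I-\widehat{\mathcal{L}}_2$ are invertible under the stated hypotheses. *)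

(* Defs.v *)
From HB Require Import structures.
From mathcomp Require Import all_boot all_order all_algebra.
From mathcomp Require Import all_classical all_reals.
Set Implicit Arguments. Unset Strict Implicit. Unset Printing Implicit Defensive.
Import Order.TTheory GRing.Theory Num.Theory.
Local Open Scope ring_scope.
Local Open Scope classical_set_scope.

Definition inner (R : realType) (N : nat) (x y : 'cV[R]_N) : R := (x^T *m y) 0 0.

Definition enorm (R : realType) (N : nat) (x : 'cV[R]_N) : R := Num.sqrt (inner x x).

Definition opnorm2 (R : realType) (N : nat) (A : 'M[R]_N) : R :=
  sup [set enorm (A *m x) | x in [set x : 'cV[R]_N | enorm x <= 1]].

(* Main.v *)
Require Import Defs.
From HB Require Import structures.
From mathcomp Require Import all_boot all_order all_algebra.
From mathcomp Require Import all_classical all_reals.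
From mathcomp Require Import ring lra.
Import Order.TTheory GRing.Theory Num.Theory.
Local Open Scope ring_scope.

Section S.
Variables (R : realType) (N : nat).
Implicit Types (x y z u v : 'cV[R]_N).

Lemma innerE x y : inner x y = \sum_i x i 0 * y i 0.
Proof. by rewrite /inner !mxE; apply: eq_bigr => i _; rewrite mxE. Qed.

Lemma innerC x y : inner x y = inner y x.
Proof. by rewrite !innerE; apply: eq_bigr => i _; rewrite mulrC. Qed.

Lemma innerDl x y z : inner (x + y) z = inner x z + inner y z.
Proof. by rewrite !innerE -big_split; apply: eq_bigr => i _; rewrite !mxE mulrDl. Qed.

Lemma innerZl a x y : inner (a *: x) y = a * inner x y.
Proof. by rewrite !innerE mulr_sumr; apply: eq_bigr => i _; rewrite !mxE mulrA. Qed.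

Lemma innerNl x y : inner (- x) y = - inner x y.
Proof. by rewrite -scaleN1r innerZl mulN1r. Qed.

Lemma innerDr x y z : inner z (x + y) = inner z x + inner z y.
Proof. by rewrite innerC innerDl !(innerC z). Qed.

Lemma innerZr a x y : inner y (a *: x) = a * inner y x.
Proof. by rewrite innerC innerZl innerC. Qed.

Lemma innerNr x y : inner y (- x) = - inner y x.
Proof. by rewrite innerC innerNl innerC. Qed.

Lemma inner_ge0 x : 0 <= inner x x.
Proof. by rewrite innerE; apply: sumr_ge0 => i _; rewrite -expr2 sqr_ge0. Qed.

Lemma inner_eq0 x : inner x x = 0 -> x = 0.
Proof.
rewrite innerE => /eqP; rewrite psumr_eq0 => [/allP H|i _]; last by rewrite -expr2 sqr_ge0.
apply/matrixP => i j; rewrite (ord1 j) mxE.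
by have /(_ (mem_index_enum i)) := H i; rewrite mulf_eq0 orbb => /eqP.
Qed.

Lemma enorm_ge0 x : 0 <= enorm x.
Proof. exact: sqrtr_ge0. Qed.

Lemma enorm_sq x : enorm x ^+ 2 = inner x x.
Proof. by rewrite sqr_sqrtr // inner_ge0. Qed.

Lemma cauchy_schwarz u v : inner u v <= enorm u * enorm v.
Proof.
have [a0|] := eqVneq (enorm u) 0.
  rewrite a0 mul0r; have : inner u u = 0 by rewrite -enorm_sq a0 expr0n.
  by move/inner_eq0 => ->; rewrite innerC innerE big1 // => i _; rewrite mxE mulr0.
have [b0|] := eqVneq (enorm v) 0.
  rewrite b0 mulr0; have : inner v v = 0 by rewrite -enorm_sq b0 expr0n.
  by move/inner_eq0 => ->; rewrite innerE big1 // => i _; rewrite mxE mulr0.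
move=> bn an.
have ha : 0 < enorm u by rewrite lt_def an enorm_ge0.
have hb : 0 < enorm v by rewrite lt_def bn enorm_ge0.
set a := enorm u; set b := enorm v.
have := inner_ge0 (b *: u - a *: v).
rewrite !(innerDl, innerDr, innerZl, innerZr, innerNl, innerNr).
rewrite -!enorm_sq -/a -/b (innerC v u) => H.
have hab : 0 < a * b by rewrite mulr_gt0.
nra.
Qed.

Lemma enorm_triangle u v : enorm (u + v) <= enorm u + enorm v.
Proof.
have h := enorm_sq (u + v).
rewrite !(innerDl, innerDr) (innerC v u) -!enorm_sq in h.
have := cauchy_schwarz u v.
have := enorm_ge0 u; have := enorm_ge0 v; have := enorm_ge0 (u + v).
nra.
Qed.

Lemma enormZ a x : enorm (a *: x) = `|a| * enorm x.
Proof.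
by rewrite /enorm innerZl innerZr mulrA -expr2 sqrtrM ?sqr_ge0 // sqrtr_sqr.
Qed.

Lemma enorm_le x y : inner x x <= inner y y -> enorm x <= enorm y.
Proof. by move=> h; rewrite /enorm ler_sqrt // inner_ge0. Qed.

Lemma enorm_scale_le (c : R) x y : 0 <= c -> c ^+ 2 * inner x x <= inner y y ->
  c * enorm x <= enorm y.
Proof.
move=> c0 h; rewrite -(ger0_norm c0) -enormZ; apply: enorm_le.
rewrite innerZl innerZr mulrA -expr2; exact: h.
Qed.

Lemma expand c (L : 'M[R]_N) x :
  inner ((c%:M - L) *m x) ((c%:M - L) *m x) =
  c ^+ 2 * inner x x - 2 * c * inner (L *m x) x + inner (L *m x) (L *m x).
Proof.
rewrite mulmxBl mul_scalar_mx.
rewrite !(innerDl, innerDr, innerZl, innerZr, innerNl, innerNr) (innerC x (L *m x)).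
ring.
Qed.

Lemma trL (L : 'M[R]_N) x : inner (L^T *m x) x = inner (L *m x) x.
Proof.
by rewrite innerC /inner trmx_mul mulmxA.
Qed.

Lemma unit_shift c (L : 'M[R]_N) : 0 < c ->
  (forall x, inner (L *m x) x <= 0) -> (c%:M - L) \in unitmx.
Proof.
move=> c0 hL; rewrite unitmxE unitfE; apply/negP => /det0P [v vn0 hv].
have hx : (c%:M - L^T) *m v^T = 0.
  by rewrite -[c%:M]tr_scalar_mx -linearB /= -trmx_mul hv trmx0.
have := expand c L^T v^T; rewrite hx trL.
have -> : inner (0 : 'cV[R]_N) 0 = 0 by rewrite innerE big1 // => i _; rewrite mxE mul0r.
have := hL v^T; have := inner_ge0 (L^T *m v^T); have := inner_ge0 v^T.
move=> h1 h2 h3 h4.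
have : inner v^T v^T = 0.
  apply/eqP; rewrite eq_le h1 andbT.
  have hc2 : 0 < c ^+ 2 by rewrite exprn_gt0.
  rewrite -(pmulr_rle0 _ hc2); nra.
move/inner_eq0 => /(congr1 trmx); rewrite trmxK trmx0 => v0.
by rewrite v0 eqxx in vn0.
Qed.

Lemma coercive c (L : 'M[R]_N) x : 0 <= c ->
  (forall x, inner (L *m x) x <= 0) ->
  c ^+ 2 * inner x x <= inner ((c%:M - L) *m x) ((c%:M - L) *m x).
Proof.
move=> c0 hL; rewrite expand; have := hL x; have := inner_ge0 (L *m x).
nra.
Qed.

Lemma shift_mono d c (L : 'M[R]_N) x : 0 <= d -> d <= c ->
  (forall x, inner (L *m x) x <= 0) ->
  inner ((d%:M - L) *m x) ((d%:M - L) *m x) <=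
  inner ((c%:M - L) *m x) ((c%:M - L) *m x).
Proof.
move=> d0 dc hL; rewrite !expand; have := hL x; have := inner_ge0 x.
move=> ha hb.
have h1 : 0 <= (c - d) * (c + d) * inner x x.
  by rewrite !mulr_ge0 // ?subr_ge0 // addr_ge0 // (le_trans d0).
have h2 : 0 <= (c - d) * - inner (L *m x) x.
  by rewrite mulr_ge0 // ?subr_ge0 // oppr_ge0.
nra.
Qed.

End S.

Lemma inner00 (R : realType) N : inner (0 : 'cV[R]_N) 0 = 0.
Proof. by rewrite innerE big1 // => i _; rewrite mxE mul0r. Qed.

Theorem mainTheorem2 (R : realType) (N : nat) (eta beta gamma : R)
  (L1 L2 : 'M[R]_N)
  (heta : 0 < eta) (hgamma : eta <= gamma)
  (hL1 : forall x : 'cV[R]_N, inner (L1 *m x) x <= 0)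
  (hL2 : forall x : 'cV[R]_N, inner (L2 *m x) x <= 0) :
  opnorm2 (((eta%:M - L2) + beta ^+ 2 *: invmx (eta%:M - L1))
            *m invmx (gamma%:M - L2))
  <= 1 + beta ^+ 2 / (gamma * eta).
Proof.
have hg : 0 < gamma := lt_le_trans heta hgamma.
have uC : gamma%:M - L2 \in unitmx := @unit_shift _ _ _ _ hg hL2.
have u1 : eta%:M - L1 \in unitmx := @unit_shift _ _ _ _ heta hL1.
rewrite /opnorm2; apply: ge_sup.
  exists (enorm ((((eta%:M - L2) + beta ^+ 2 *: invmx (eta%:M - L1))
            *m invmx (gamma%:M - L2)) *m 0)); exists 0 => //=.
  by rewrite /enorm inner00 sqrtr0.
move=> r [x /= hx <-].
set y := invmx (gamma%:M - L2) *m x.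
have hCy : (gamma%:M - L2) *m y = x by rewrite mulmxA mulmxV // mul1mx.
set z := invmx (eta%:M - L1) *m y.
have hBz : (eta%:M - L1) *m z = y by rewrite mulmxA mulmxV // mul1mx.
have -> : (eta%:M - L2 + beta ^+ 2 *: invmx (eta%:M - L1)) *m invmx (gamma%:M - L2) *m x
   = (eta%:M - L2) *m y + beta ^+ 2 *: z.
  by rewrite -mulmxA mulmxDl -scalemxAl.
have h1 : enorm ((eta%:M - L2) *m y) <= enorm x.
  apply: enorm_le; rewrite -hCy; exact: @shift_mono _ _ eta gamma L2 y (ltW heta) hgamma hL2.
have h2 : gamma * enorm y <= enorm x.
  apply: enorm_scale_le; first exact: ltW.
  by have := @coercive _ _ _ _ y (ltW hg) hL2; rewrite hCy.
have h3 : eta * enorm z <= enorm y.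
  apply: enorm_scale_le; first exact: ltW.
  by have := @coercive _ _ _ _ z (ltW heta) hL1; rewrite hBz.
have hge : 0 < gamma * eta by rewrite mulr_gt0.
have h4 : gamma * eta * enorm z <= 1.
  have := @enorm_ge0 _ _ z; have := @enorm_ge0 _ _ y; nra.
have h5 : enorm z <= (gamma * eta)^-1.
  rewrite -[enorm z](mulKf (lt0r_neq0 hge)) -[X in _ <= X]mulr1.
  by apply: ler_wpM2l => //; rewrite invr_ge0 ltW.
have := @enorm_triangle _ _ ((eta%:M - L2) *m y) (beta ^+ 2 *: z).
rewrite enormZ ger0_norm ?sqr_ge0 // => ht.
apply: (le_trans ht); apply: lerD; first exact: le_trans h1 hx.
by apply: ler_wpM2l; rewrite ?sqr_ge0.
Qed.
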